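(* Let $N\ge2$ be an integer, $b>0$, $h=b/N$, and let $A_h=h^2B_h$, where $B_h=(b_{i,j})_{i,j=1}^{N-1}$ is the symmetric Toeplitz matrix with $b_{i,i}=\frac{2N}{3}-1$, $b_{i,j}=\frac N6-1$ if $|i-j|=1$, and $b_{i,j}=-1$ if $|i-j|\ge2$. Let $D_h$ be the diagonal of $A_h$. Then $1\le\lambda_{\max}(D_h^{-1}A_h)<3$.
   Context: $A_h$ is the stiffness matrix of the piecewise linear finite element discretization on the uniform mesh of $(0,b)$ of the nonlocal operator $u\mapsto\int_0^b[u(x)-u(y)]dy$ (constant kernel) with zero exterior condition. *)

(* Defs.v *)
From HB Require Import structures.
From mathcomp Require Import all_boot all_order all_algebra.
From mathcomp Require Import reals.
Set Implicit Arguments. Unset Strict Implicit. Unset Printing Implicit Defensive.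
Import Order.TTheory GRing.Theory Num.Theory.
Local Open Scope ring_scope.

(* B_h : the (N-1)x(N-1) symmetric Toeplitz matrix, indices 0..N-2
   (shifted from the paper's 1..N-1). *)
Definition Bmat (R : realType) (N : nat) : 'M[R]_(N.-1) :=
  \matrix_(i < N.-1, j < N.-1)
    if i == j then (2 * N%:R) / 3 - 1
    else if (i.+1 == j :> nat) || (j.+1 == i :> nat) then N%:R / 6 - 1
    else -1.

Definition Amat (R : realType) (N : nat) (b : R) : 'M[R]_(N.-1) :=
  (b / N%:R) ^+ 2 *: Bmat R N.

Definition Dmat (R : realType) (N : nat) (b : R) : 'M[R]_(N.-1) :=
  diag_mx (\row_i Amat N b i i).

Definition is_lambda_max (R : realType) (n : nat) (M : 'M[R]_n) (l : R) : Prop :=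
  eigenvalue M l /\ (forall m : R, eigenvalue M m -> m <= l).

(* Main.v *)
Require Import Defs.
From HB Require Import structures.
Set Warnings "-all".
From mathcomp Require Import all_boot all_order all_algebra.
From mathcomp Require Import reals.
From mathcomp Require Import complex polyrcf spectral sesquilinear ring lra zify.
Import Order.TTheory GRing.Theory Num.Theory.
Set Implicit Arguments. Unset Strict Implicit.
Local Open Scope ring_scope.
Lemma bigmax_spec (R : realType) (s : seq R) (r : R) :
  let l := \big[Num.max/r]_(x <- s) x in
  (l = r \/ l \in s) /\ (r <= l) /\ (forall x, x \in s -> x <= l).
Proof.
elim: s => [|a s IH] /=; first by rewrite big_nil; split; [left|split].
rewrite big_cons; move: IH => [H1 [H2 H3]].
set l := \big[_/_]_(_ <- _) _ in H1 H2 H3 *.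
split; [|split].
- rewrite maxEle; case: ifP => _; last by right; rewrite mem_head.
  by case: H1 => [->|h]; [left|right; rewrite inE h orbT].
- by rewrite le_max H2 orbT.
- move=> x; rewrite inE; case/orP => [/eqP->|xs]; first by rewrite le_max lexx.
  by rewrite le_max (H3 _ xs) orbT.
Qed.

Lemma max_eig (R : realType) n (B : 'M[R]_n) r :
  eigenvalue B r -> exists l, is_lambda_max B l /\ r <= l.
Proof.
move=> Hr; set p := char_poly B.
have p0 : p != 0 := monic_neq0 (char_poly_monic B).
have Hin x : eigenvalue B x = (x \in rootsR p).
  by rewrite eigenvalue_root_char -(roots_on_rootsR p0 x) in_itv.
have [H1 [H2 H3]] := bigmax_spec (rootsR p) r.
eexists; split; [split|]; last exact: H2.
- by case: H1 => [->|h]; [exact: Hr|rewrite Hin].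
- by move=> m; rewrite Hin; exact: H3.
Qed.

Lemma real_C (R : rcfType) (x : R[i]) : x \is Num.real -> x = real_complex R (complex.Re x).
Proof.
case: x => a b; rewrite realE !lecE /= => /orP[]/andP[/eqP h _]; [by rewrite h | by rewrite -h].
Qed.

Lemma exists_eig_ge_trace (R : realType) n (B : 'M[R]_n.+1) : B^T = B ->
  exists r, eigenvalue B r /\ \tr B <= n.+1%:R * r.
Proof.
move=> Bsym.
pose BC := map_mx (real_complex R) B.
have BCsym : BC \is symmetricmx.
  apply/is_hermitianmxP; rewrite expr0 scale1r map_mx_id //.
  by rewrite /BC map_trmx Bsym.
have BCreal : BC \is a realmx.
  apply/mxOverP => i j; rewrite mxE realE.
  by rewrite -[0 : R[i]]/(real_complex R 0) !lecR; exact: le_total.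
have BCh := realsym_hermsym BCsym BCreal.
have /orthomx_spectralP E := hermitian_normalmx BCh.
have Xreal := hermitian_spectral_diag_real BCh.
set P := spectralmx BC in E; set X := spectral_diag BC in E Xreal.
have Pu : P \in unitmx := spectral_unit BC.
have Xr j : X 0 j = real_complex R (complex.Re (X 0 j)).
  by apply: real_C; move/mxOverP: Xreal; apply.
have trE : \tr B = \sum_j complex.Re (X 0 j).
  apply: (@complexI R).
  have -> : real_complex R (\tr B) = \tr BC.
    by rewrite /mxtrace rmorph_sum; apply: eq_bigr => i _; rewrite mxE.
  rewrite E mxtrace_mulC mulmxA mulmxV // mul1mx mxtrace_diag rmorph_sum.
  by apply: eq_bigr => j _; exact: Xr.
have eigX j : eigenvalue B (complex.Re (X 0 j)).
  rewrite eigenvalue_root_char -(fmorph_root (real_complex R)) map_char_poly.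
  rewrite -eigenvalue_root_char (_ : _ (complex.Re (X 0 j)) = X 0 j); last exact: esym (Xr j).
  apply/eigenvalueP.
  exists (delta_mx 0 j *m P).
    rewrite -/BC {1}E !mulmxA mulmxK //.
    rewrite scalemxAl; congr (_ *m _); rewrite mul_mx_diag.
    apply/matrixP => a b; rewrite !mxE; case: (eqVneq b j) => [->|]; first by rewrite mulrC.
    by move=> _; rewrite andbF mul0r mulr0.
  apply/negP => /eqP h; have := congr1 (fun M => M *m invmx P) h.
  rewrite mulmxK // mul0mx => /matrixP /(_ 0 j); rewrite !mxE !eqxx /=.
  by move/eqP; rewrite oner_eq0.
have [j Hj] : exists j, \tr B <= n.+1%:R * complex.Re (X 0 j).
  apply/existsP; apply: contraT; rewrite negb_exists => /forallP H.
  have : \sum_(j < n.+1) n.+1%:R * complex.Re (X 0 j) < \sum_(j < n.+1) \tr B.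
    apply: ltr_sum; first by apply/hasP; exists ord0; rewrite ?mem_index_enum.
    by move=> i _; rewrite ltNge H.
  by rewrite -mulr_sumr -trE sumr_const card_ord mulr_natl ltxx.
by exists (complex.Re (X 0 j)).
Qed.
Definition adj (i j : nat) : bool := (i.+1 == j) || (j.+1 == i).

Lemma count1 (R : realType) K (a : nat) : \sum_(j < K) (((j:nat) == a)%:R : R) <= 1.
Proof.
case: (ltnP a K) => h.
  rewrite (bigD1 (Ordinal h)) //= eqxx big1 ?addr0 // => j /negbTE hj.
  suff -> : ((j:nat) == a) = false by [].
  by apply/negbTE; apply: contraFN hj => /eqP hja; apply/eqP/val_inj.
rewrite big1 ?ler01 // => j _.
suff -> : ((j:nat) == a) = false by [].
apply/eqP; have := ltn_ord j; lia.
Qed.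

Lemma deg_le (R : realType) K (k : 'I_K) :
  \sum_(j < K) ((adj k j)%:R : R) <= 2 - ((k:nat) == 0%N)%:R.
Proof.
have H : \sum_(j < K) ((adj k j)%:R : R) <=
   \sum_(j < K) (((j:nat) == k.+1)%:R + ((j.+1 == k)%:R : R)).
  apply: ler_sum => j _; rewrite /adj eq_sym.
  by case: ((j:nat) == k.+1); case: (j.+1 == k); rewrite /= ?mulr1n ?mulr0n; lra.
apply: (le_trans H); rewrite big_split /=.
case: k {H} => [[|k]] hk /=.
  have z : \sum_(j < K) ((j.+1 == 0%N)%:R : R) = 0 by rewrite big1.
  rewrite z addr0.
  by apply: (le_trans (count1 R K 1)); lra.
apply: (le_trans (lerD (count1 R K k.+2) (count1 R K k))); lra.
Qed.

Lemma Bentry (R : realType) n (i j : 'I_n.+1) :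
  Bmat R n.+2 i j = -1 + ((i == j)%:R * (2 * n.+2%:R / 3))
                     + (adj i j)%:R * (n.+2%:R / 6).
Proof.
rewrite mxE /adj; case: eqVneq => [->|ne].
  have -> : ((j:nat).+1 == j) = false by apply/eqP; lia.
  rewrite /= mulr1n mulr0n; ring.
case: ((i:nat).+1 == j); case: ((j:nat).+1 == i); rewrite /= ?mulr1n ?mulr0n; ring.
Qed.

Lemma quad_bound (R : realType) n (v : 'rV[R]_n.+1) :
  \sum_j \sum_i v 0 i * v 0 j * Bmat R n.+2 i j <=
  n.+2%:R * (\sum_j v 0 j ^+ 2) - (\sum_j v 0 j) ^+ 2
    - n.+2%:R / 6 * v 0 ord0 ^+ 2.
Proof.
set Q := \sum_j v 0 j ^+ 2; set s := \sum_j v 0 j.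
set Nr := n.+2%:R.
have Nr0 : 0 <= Nr / 6 by apply: divr_ge0; rewrite ler0n.
have T1 : \sum_(j < n.+1) \sum_(i < n.+1) (v 0 i * v 0 j) = s ^+ 2.
  rewrite expr2 {2}/s mulr_sumr; apply: eq_bigr => j _.
  by rewrite /s mulr_suml.
have T2 : \sum_(j < n.+1) \sum_(i < n.+1) ((i == j)%:R * (v 0 i * v 0 j)) = Q.
  apply: eq_bigr => j _; rewrite (bigD1 j) //= eqxx mul1r big1 ?addr0 ?expr2 //.
  by move=> i /negbTE ->; rewrite mul0r.
have E : \sum_(j < n.+1) \sum_(i < n.+1) v 0 i * v 0 j * Bmat R n.+2 i j =
  - s ^+ 2 + (2 * Nr / 3) * Q +
  Nr / 6 * \sum_(j < n.+1) \sum_(i < n.+1) (adj i j)%:R * (v 0 i * v 0 j).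
  rewrite -T1 -T2 !mulr_sumr -sumrN -!big_split /=; apply: eq_bigr => j _.
  rewrite !mulr_sumr -sumrN -!big_split /=; apply: eq_bigr => i _.
  rewrite Bentry /Nr; ring.
pose deg (k : 'I_n.+1) := \sum_(l < n.+1) ((adj k l)%:R : R).
have A1 : \sum_(j < n.+1) \sum_(i < n.+1) (adj i j)%:R * (v 0 i * v 0 j) <=
   \sum_(j < n.+1) \sum_(i < n.+1) ((adj i j)%:R * (v 0 i ^+ 2) / 2 + (adj i j)%:R * (v 0 j ^+ 2) / 2).
  apply: ler_sum => j _; apply: ler_sum => i _.
  case: (adj i j); rewrite /= ?mulr1n ?mulr0n ?mul1r ?mul0r ?addr0 //.
  have := sqr_ge0 (v 0 i - v 0 j); rewrite sqrrB; lra.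
have A2 : \sum_(j < n.+1) \sum_(i < n.+1) ((adj i j)%:R * (v 0 i ^+ 2) / 2 + (adj i j)%:R * (v 0 j ^+ 2) / 2)
   = \sum_(k < n.+1) v 0 k ^+ 2 * deg k.
  under eq_bigr do rewrite big_split.
  rewrite big_split /= exchange_big /= -big_split /=; apply: eq_bigr => k _.
  rewrite /deg mulr_sumr -big_split /=; apply: eq_bigr => l _.
  have -> : adj l k = adj k l by rewrite /adj orbC.
  by rewrite -splitr mulrC.
have A3 : \sum_(k < n.+1) v 0 k ^+ 2 * deg k <= 2 * Q - v 0 ord0 ^+ 2.
  have -> : 2 * Q - v 0 ord0 ^+ 2 = \sum_(k < n.+1) v 0 k ^+ 2 * (2 - ((k:nat) == 0%N)%:R).
    rewrite /Q mulr_sumr (bigD1 ord0) //= [X in _ = X](bigD1 ord0) //=.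
    rewrite [X in _ = _ + X](eq_bigr (fun k => 2 * v 0 k ^+ 2)); first by ring.
    by move=> k; rewrite -(inj_eq val_inj) /= => /negbTE ->; by rewrite mulr0n subr0 mulrC.
  apply: ler_sum => k _; apply: ler_wpM2l; first exact: sqr_ge0.
  exact: deg_le.
rewrite E; rewrite -A2 in A3; have := le_trans A1 A3.
move=> h; have := ler_wpM2l Nr0 h. lra.
Qed.

Lemma eig_ineq (R : realType) n m (v : 'rV[R]_n.+1) :
  v != 0 -> v *m Bmat R n.+2 = m *: v ->
  0 < \sum_j v 0 j ^+ 2 /\
  m * (\sum_j v 0 j ^+ 2) <= n.+2%:R * (\sum_j v 0 j ^+ 2) - (\sum_j v 0 j) ^+ 2
    - n.+2%:R / 6 * v 0 ord0 ^+ 2.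
Proof.
move=> vn0 Hv.
have Hj (j : 'I_n.+1) : \sum_(i < n.+1) v 0 i * Bmat R n.+2 i j = m * v 0 j.
  by move/matrixP: (Hv) => /(_ 0 j); rewrite !mxE.
split.
  rewrite lt_def sumr_ge0 ?andbT; last by move=> j _; exact: sqr_ge0.
  apply: contra vn0 => /eqP Q0; apply/eqP/rowP => j; rewrite mxE.
  have := psumr_eq0P (fun j _ => sqr_ge0 (v 0 j)) Q0 (i:=j) isT.
  by move/eqP; rewrite sqrf_eq0 => /eqP.
apply: le_trans (quad_bound v); rewrite le_eqVlt; apply/orP; left; apply/eqP.
rewrite mulr_sumr; apply: eq_bigr => j _.
rewrite expr2 mulrA -Hj mulr_suml; apply: eq_bigr => i _.
by rewrite mulrAC.
Qed.

Lemma eigB_lt (R : realType) n m :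
  eigenvalue (Bmat R n.+2) m -> m < 2 * n.+2%:R - 3.
Proof.
move/eigenvalueP => [v Hv vn0]; have [Qpos ineq] := eig_ineq vn0 Hv.
case: n v Hv vn0 Qpos ineq => [|[|n]] v Hv vn0 Qpos ineq.
- rewrite !big_ord1 in Qpos ineq.
  have h : 0 <= (2/3 - m) * v 0 ord0 ^+ 2 by lra.
  rewrite pmulr_lge0 // in h; lra.
- rewrite !big_ord_recr !big_ord0 /= !add0r in Qpos ineq.
  have e : widen_ord (leqnSn 1) ord_max = ord0 :> 'I_2 by apply/val_inj.
  rewrite e in Qpos ineq.
  move: Qpos ineq; set a := v 0 ord0; set b := v 0 ord_max => Qpos ineq.
  rewrite ltNge; apply/negP => hm.
  have h1 : (a + b) ^+ 2 + a ^+ 2 / 2 <= 0 by nra.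
  have ha : a ^+ 2 = 0 by have := sqr_ge0 (a + b); have := sqr_ge0 a; lra.
  have hab : (a + b) ^+ 2 = 0 by have := sqr_ge0 (a + b); have := sqr_ge0 a; lra.
  move/eqP: ha; rewrite sqrf_eq0 => /eqP ha.
  move/eqP: hab; rewrite sqrf_eq0 ha add0r => /eqP hb.
  by move: Qpos; rewrite ha hb expr2 !mul0r addr0 ltxx.
- set Q := \sum_j _ in Qpos ineq.
  have hm : m * Q <= n.+4%:R * Q.
    apply: (le_trans ineq); have := sqr_ge0 (\sum_j v 0 j).
    have : 0 <= n.+4%:R / 6 * v 0 ord0 ^+ 2 by apply: mulr_ge0; [apply: divr_ge0|apply: sqr_ge0].
    lra.
  rewrite ler_pM2r // in hm.
  have : 4 <= n.+4%:R :> R by rewrite (ler_nat R 4 n.+4).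
  lra.
Qed.

Lemma Bsym (R : realType) n : (Bmat R n)^T = Bmat R n.
Proof. by apply/matrixP => i j; rewrite !mxE eq_sym orbC. Qed.

Theorem lemma4p3 (R : realType) (N : nat) (b : R) :
  (2 <= N)%N -> 0 < b ->
  exists l : R,
    is_lambda_max (invmx (Dmat N b) *m Amat N b) l /\ 1 <= l < 3.
Proof.
case: N => [|[|n]] // _ b0.
set c : R := 2 * n.+2%:R / 3 - 1.
have N2 : 2 <= n.+2%:R :> R by rewrite (ler_nat R 2 n.+2).
have c0 : 0 < c by rewrite /c; lra.
set h2 : R := (b / n.+2%:R) ^+ 2.
have h20 : 0 < h2 by rewrite /h2 exprn_gt0 // divr_gt0 // ltr0n.
set B := Bmat R n.+2.
have D : Dmat n.+2 b = (h2 * c)%:M.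
  apply/matrixP => i j; rewrite !mxE eqxx /=.
  by [].
have M : invmx (Dmat n.+2 b) *m Amat n.+2 b = c^-1 *: B.
  rewrite D invmx_scalar /Amat mul_scalar_mx scalerA; congr (_ *: _).
  rewrite -/h2 invfM mulrAC mulVf ?mul1r //; exact: lt0r_neq0.
have eigS m : eigenvalue (c^-1 *: B) m = eigenvalue B (c * m).
  apply/eigenvalueP/eigenvalueP => -[v Hv vn0]; exists v => //.
    have := congr1 (fun X => c *: X) Hv.
    by rewrite -scalemxAr scalerA mulfV ?scale1r ?(lt0r_neq0 c0) // scalerA.
  by rewrite -scalemxAr Hv scalerA mulrA mulVf ?mul1r ?(lt0r_neq0 c0).
have [r [Er Hr]] := exists_eig_ge_trace (Bsym R n.+2).
have trB : \tr B = n.+1%:R * c.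
  rewrite /mxtrace (eq_bigr (fun _ => c)); last by move=> i _; rewrite mxE eqxx.
  by rewrite sumr_const card_ord mulr_natl.
rewrite trB ler_pM2l ?ltr0n // in Hr.
have [l [[El Hl] rl]] := max_eig Er.
exists (l / c); rewrite M; split; first split.
- by rewrite eigS mulrC divfK // (lt0r_neq0 c0).
- move=> m; rewrite eigS => /Hl h; rewrite ler_pdivlMr // mulrC //.
have lt3 := eigB_lt El.
apply/andP; split.
  by rewrite ler_pdivlMr // mul1r; apply: le_trans rl.
by rewrite ltr_pdivrMr //; rewrite /c; lra.
Qed.
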